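(* Let $\mathbb{K}=(G_{\mathbb{K}},M_{\mathbb{K}},I_{\mathbb{K}})$ and $\mathbb{S}=(G_{\mathbb{S}},M_{\mathbb{S}},I_{\mathbb{S}})$ be formal contexts and let $\sigma\colon G_{\mathbb{K}}\to G_{\mathbb{S}}$ be a map. Define $I_\sigma\subseteq G_{\mathbb{K}}\times M_{\mathbb{S}}$ by $I_\sigma=\{(g,\sigma(g))\mid g\in G_{\mathbb{K}}\}\circ I_{\mathbb{S}}$, i.e. $(g,m)\in I_\sigma$ iff $(\sigma(g),m)\in I_{\mathbb{S}}$, and let $\mathbb{A}=\mathbb{K}\mid (G_{\mathbb{K}},M_{\mathbb{S}},I_\sigma)$ be the apposition. Then $\sigma$ is an $\mathbb{S}$-measure of $\mathbb{A}$ and $\mathrm{id}_{G_{\mathbb{K}}}$ is a $\mathbb{K}$-measure of $\mathbb{A}$.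
   Context: A formal context is a triple $(G,M,I)$ with $G$ a non-empty finite set (objects), $M$ a finite set (attributes) and $I\subseteq G\times M$. For $A\subseteq G$ let $A'=\{m\in M\mid \forall a\in A: (a,m)\in I\}$ and for $B\subseteq M$ let $B'=\{g\in G\mid \forall b\in B:(g,b)\in I\}$. An extent of $(G,M,I)$ is a set $A\subseteq G$ with $A''=A$; $\mathrm{Ext}(G,M,I)$ denotes the set of all extents. For formal contexts $\mathbb{K}=(G,M,I)$ and $\mathbb{S}=(G_{\mathbb{S}},M_{\mathbb{S}},I_{\mathbb{S}})$, a map $\sigma\colon G\to G_{\mathbb{S}}$ is an $\mathbb{S}$-measure of $\mathbb{K}$ iff for every $A\in\mathrm{Ext}(\mathbb{S})$ the preimage $\sigma^{-1}(A)=\{g\in G\mid \sigma(g)\in A\}$ is in $\mathrm{Ext}(\mathbb{K})$. The apposition of two contexts $(G,M_1,I_1)$ and $(G,M_2,I_2)$ on the same object set is $(G, M_1\cup M_2, I_1\cup I_2)$, where if $M_1\cap M_2\neq\emptyset$ the attribute sets are first made disjoint (disjoint union). *)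

(* Defs.v *)
From mathcomp Require Import all_boot.
Set Implicit Arguments. Unset Strict Implicit. Unset Printing Implicit Defensive.

Record context := Context {
  ctx_G : finType;
  ctx_M : finType;
  ctx_I : ctx_G -> ctx_M -> bool }.

Definition ext_prime (K : context) (A : {set ctx_G K}) : {set ctx_M K} :=
  [set m | [forall a in A, ctx_I a m]].
Definition int_prime (K : context) (B : {set ctx_M K}) : {set ctx_G K} :=
  [set g | [forall b in B, ctx_I g b]].

Definition is_extent (K : context) (A : {set ctx_G K}) : Prop :=
  int_prime (ext_prime A) = A.

Definition is_measure (K S : context) (sigma : ctx_G K -> ctx_G S) : Prop :=
  forall A : {set ctx_G S}, is_extent A -> is_extent (sigma @^-1: A).

Definition apposition (G M1 M2 : finType) (I1 : G -> M1 -> bool)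
  (I2 : G -> M2 -> bool) : context :=
  @Context G (M1 + M2)%type
    (fun g m => match m with inl m1 => I1 g m1 | inr m2 => I2 g m2 end).

Definition I_sigma (K S : context) (sigma : ctx_G K -> ctx_G S)
  (g : ctx_G K) (m : ctx_M S) : bool := ctx_I (sigma g) m.

Definition app_ctx (K S : context) (sigma : ctx_G K -> ctx_G S) : context :=
  @apposition (ctx_G K) (ctx_M K) (ctx_M S) (@ctx_I K) (I_sigma sigma).

(* Main.v *)
Require Import Defs.
From mathcomp Require Import all_boot.

Lemma int_extent (C : context) (B : {set ctx_M C}) : is_extent (int_prime B).
Proof.
rewrite /is_extent; apply/setP => g; rewrite !inE.
apply/forallP/forallP => H.
- move=> b; apply/implyP => Hb; move/implyP: (H b); apply.
  rewrite inE; apply/forallP => a; apply/implyP; rewrite inE => /forallP/(_ b)/implyP; apply.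
  exact: Hb.
- move=> m; apply/implyP; rewrite inE => /forallP/(_ g)/implyP; apply.
  by rewrite inE; apply/forallP.
Qed.

Lemma ext_eq (C : context) (A : {set ctx_G C}) : is_extent A -> A = int_prime (ext_prime A).
Proof. by move=> ->. Qed.

Theorem proposition2 (K S : context) (sigma : ctx_G K -> ctx_G S)
  (hGK : 0 < #|ctx_G K|) (hGS : 0 < #|ctx_G S|) :
  @is_measure (app_ctx sigma) S sigma /\
  @is_measure (app_ctx sigma) K (fun g : ctx_G K => g).
Proof.
split => A HA.
- have -> : sigma @^-1: A =
    @int_prime (app_ctx sigma) [set inr b | b in ext_prime A].
    apply/setP => g; rewrite inE {1}(@ext_eq _ _ HA) !inE.
    apply/forallP/forallP => H.
    + move=> m; apply/implyP => /imsetP [b Hb ->]; move: (H b).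
      by rewrite Hb.
    + move=> b; apply/implyP => Hb; move: (H (inr b)).
      by rewrite imset_f.
  exact: int_extent.
- have -> : (fun g : ctx_G K => g) @^-1: A =
    @int_prime (app_ctx sigma) [set inl b | b in ext_prime A].
    apply/setP => g; rewrite inE {1}(@ext_eq _ _ HA) !inE.
    apply/forallP/forallP => H.
    + move=> m; apply/implyP => /imsetP [b Hb ->]; move: (H b).
      by rewrite Hb.
    + move=> b; apply/implyP => Hb; move: (H (inl b)).
      by rewrite imset_f.
  exact: int_extent.
Qed.
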